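(* Let $n\ge2$, let $\gamma:I\to S^n$ be a spherical unit speed curve and let $P\in S^n$ with $P\neq\pm\mathbf{u}_n(s)$ for all $s\in I$. Then for $s\in I$: $ort_{\gamma,P}'(s)=\mathbf{0}$ if and only if either $ped_{\gamma,P}'(s)=\mathbf{0}$ or $ped_{\gamma,P}(s)$ is a singular point of $\Phi_P$.
   Context: $I\subset\mathbb{R}$ is an open interval and $S^n$ the unit sphere in $\mathbb{R}^{n+1}$; the dot denotes the Euclidean inner product. A regular curve $\gamma:I\to S^n$ is a spherical unit speed curve if, setting $\mathbf{u}_{-1}\equiv\mathbf{0}$, $\mathbf{u}_0=\gamma$, $\|\mathbf{u}_0'\|\equiv 1$, $\kappa_0\equiv 0$, the maps $\mathbf{u}_i(s)=\dfrac{\mathbf{u}_{i-1}'(s)+\kappa_{i-1}(s)\mathbf{u}_{i-2}(s)}{\|\mathbf{u}_{i-1}'(s)+\kappa_{i-1}(s)\mathbf{u}_{i-2}(s)\|}$ with $\kappa_i(s)=\|\mathbf{u}_{i-1}'(s)+\kappa_{i-1}(s)\mathbf{u}_{i-2}(s)\|>0$ are well-defined for $1\le i\le n-1$ and all $s\in I$. Then $\mathbf{u}_0(s),\dots,\mathbf{u}_{n-1}(s)$ are orthonormal, and the spherical dual curve $\mathbf{u}_n:I\to S^n$ is defined by requiring $\mathbf{u}_0(s),\dots,\mathbf{u}_n(s)$ orthonormal with $\det(\mathbf{u}_0(s),\dots,\mathbf{u}_n(s))=1$. For $P\in S^n$ with $P\cdot\mathbf{u}_n(s)\neq\pm1$,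 the spherical pedal curve is $ped_{\gamma,P}(s)=\dfrac{P-(P\cdot\mathbf{u}_n(s))\mathbf{u}_n(s)}{\sqrt{1-(P\cdot\mathbf{u}_n(s))^2}}$. For any $P\in S^n$ the spherical orthotomic curve is $ort_{\gamma,P}(s)=\sum_{i=0}^{n-1}(P\cdot\mathbf{u}_i(s))\mathbf{u}_i(s)-(P\cdot\mathbf{u}_n(s))\mathbf{u}_n(s)=P-2(P\cdot\mathbf{u}_n(s))\mathbf{u}_n(s)$. For $P\in S^n$, $\Phi_P:\mathbb{R}^{n+1}\to\mathbb{R}^{n+1}$ is $\Phi_P(\mathbf{x})=2(P\cdot\mathbf{x})\mathbf{x}-P$; a singular point of $\Phi_P$ is a point where its differential is not of full rank. *)

(* Defs.v *)
From Stdlib Require Import Reals Lra Lia.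
Open Scope R_scope.

(* A vector of R^(n+1) is represented by its coordinates 0..n. *)
Definition vec := nat -> R.

Definition vzero : vec := fun _ => 0.
Definition vadd (x y : vec) : vec := fun k => x k + y k.
Definition vscale (a : R) (x : vec) : vec := fun k => a * x k.
Definition vopp (x : vec) : vec := fun k => - x k.
Definition vsub (x y : vec) : vec := fun k => x k - y k.

Definition dot (n : nat) (x y : vec) : R := sum_f_R0 (fun k => x k * y k) n.
Definition vnorm (n : nat) (x : vec) : R := sqrt (dot n x x).

Definition veq (n : nat) (x y : vec) : Prop := forall k, (k <= n)%nat -> x k = y k.

Definition is_open_interval (I : R -> Prop) : Prop :=
  (exists x, I x) /\
  (forall x y z, I x -> I z -> x <= y <= z -> I y) /\
  (forall x, I x -> exists e, 0 < e /\ forall y, Rabs (y - x) < e -> I y).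

Definition vderiv (n : nat) (f : R -> vec) (s : R) (w : vec) : Prop :=
  forall k, (k <= n)%nat -> derivable_pt_lim (fun t => f t k) s (w k).

Definition smooth_on (I : R -> Prop) (f : R -> R) : Prop :=
  exists D : nat -> R -> R,
    (forall t, I t -> D 0%nat t = f t) /\
    (forall m t, I t -> derivable_pt_lim (D m) t (D (S m) t)).

Definition vsmooth_on (n : nat) (I : R -> Prop) (f : R -> vec) : Prop :=
  forall k, (k <= n)%nat -> smooth_on I (fun t => f t k).

(* prevu u j = u_{j-1}, with the convention u_{-1} = 0. *)
Definition prevu (u : nat -> R -> vec) (j : nat) (s : R) : vec :=
  match j with
  | O => vzero
  | S j' => u j' s
  end.

Definition minor (M : nat -> nat -> R) (j : nat) : nat -> nat -> R :=
  fun r c => M (S r) (if Nat.ltb c j then c else S c).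

Fixpoint det (m : nat) (M : nat -> nat -> R) : R :=
  match m with
  | O => 1
  | S m' => sum_f_R0 (fun j => (-1) ^ j * M 0%nat j * det m' (minor M j)) m'
  end.

(* The data (u_0,...,u_n ; kappa_0,...,kappa_{n-1}) is the spherical
   Frenet-type frame of the spherical unit speed curve u_0 on I,
   with u_n the spherical dual curve. *)
Definition spherical_frame (n : nat) (I : R -> Prop)
    (u : nat -> R -> vec) (kappa : nat -> R -> R) : Prop :=
  (forall s, I s -> kappa 0%nat s = 0) /\
  (forall i s, (1 <= i <= n - 1)%nat -> I s ->
     exists w, vderiv n (u (i - 1)%nat) s w /\
       let z := vadd w (vscale (kappa (i - 1)%nat s) (prevu u (i - 1)%nat s)) in
       kappa i s = vnorm n z /\ 0 < kappa i s /\
       veq n (u i s) (vscale (/ kappa i s) z)) /\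
  (forall s, I s ->
     dot n (u n s) (u n s) = 1 /\
     (forall i, (i < n)%nat -> dot n (u i s) (u n s) = 0) /\
     det (S n) (fun r c => u c s r) = 1).

Definition ped (n : nat) (P : vec) (un : R -> vec) (s : R) : vec :=
  vscale (/ sqrt (1 - (dot n P (un s)) ^ 2))
         (vsub P (vscale (dot n P (un s)) (un s))).

Definition ort (n : nat) (P : vec) (un : R -> vec) (s : R) : vec :=
  vsub P (vscale (2 * dot n P (un s)) (un s)).

Definition Phi (n : nat) (P : vec) (x : vec) : vec :=
  vsub (vscale (2 * dot n P x) x) P.

Definition basis (j : nat) : vec := fun k => if Nat.eqb k j then 1 else 0.

Definition singular_point_Phi (n : nat) (P : vec) (x : vec) : Prop :=
  exists J : nat -> nat -> R,
    (forall i j, (i <= n)%nat -> (j <= n)%nat ->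
       derivable_pt_lim (fun t => Phi n P (vadd x (vscale t (basis j))) i) 0 (J i j)) /\
    exists c : vec, (exists j, (j <= n)%nat /\ c j <> 0) /\
      forall i, (i <= n)%nat -> sum_f_R0 (fun j => J i j * c j) n = 0.

(* Main.v *)
Require Import Defs.
From Stdlib Require Import Reals Lra Lia.
Open Scope R_scope.

Lemma sum_lin (f g : nat -> R) (a b : R) m :
  sum_f_R0 (fun k => a * f k + b * g k) m = a * sum_f_R0 f m + b * sum_f_R0 g m.
Proof. induction m; simpl; [ring| rewrite IHm; ring]. Qed.

Lemma sum_zero m : sum_f_R0 (fun _ => 0) m = 0.
Proof. induction m; simpl; [ring| rewrite IHm; ring]. Qed.

Lemma sum_sq_nonneg f m : 0 <= sum_f_R0 (fun k => f k * f k) m.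
Proof. induction m; simpl; nra. Qed.

Lemma sum_sq_zero f m : sum_f_R0 (fun k => f k * f k) m = 0 -> forall k, (k<=m)%nat -> f k = 0.
Proof.
  induction m; simpl; intros H k Hk.
  - assert (k=0)%nat by lia; subst; nra.
  - pose proof (sum_sq_nonneg f m).
    assert (H1 : sum_f_R0 (fun k => f k * f k) m = 0) by nra.
    assert (H2 : f (S m) * f (S m) = 0) by nra.
    destruct (Nat.eq_dec k (S m)). subst; nra. apply IHm; auto; lia.
Qed.

Lemma sum_delta0 (c : nat -> R) m i : (m < i)%nat ->
  sum_f_R0 (fun k => (if Nat.eqb k i then 1 else 0) * c k) m = 0.
Proof.
  induction m; intros H.
  - unfold sum_f_R0. destruct (Nat.eqb 0 i) eqn:E; [apply Nat.eqb_eq in E; lia| ring].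
  - rewrite tech5, IHm by lia. destruct (Nat.eqb (S m) i) eqn:E; [apply Nat.eqb_eq in E; lia| ring].
Qed.

Lemma sum_delta (c : nat -> R) m i : (i <= m)%nat ->
  sum_f_R0 (fun k => (if Nat.eqb k i then 1 else 0) * c k) m = c i.
Proof.
  induction m; intros H.
  - assert (i = 0)%nat by lia; subst; simpl; ring.
  - rewrite tech5. destruct (Nat.eq_dec i (S m)).
    + subst. rewrite sum_delta0 by lia. rewrite Nat.eqb_refl. ring.
    + rewrite IHm by lia. destruct (Nat.eqb (S m) i) eqn:E; [apply Nat.eqb_eq in E; lia| ring].
Qed.

Lemma dpl_eq f x l l' : derivable_pt_lim f x l -> l = l' -> derivable_pt_lim f x l'.
Proof. intros H ->; exact H. Qed.

Lemma dpl_local f g x l e : 0 < e -> (forall y, Rabs (y - x) < e -> f y = g y) ->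
  derivable_pt_lim g x l -> derivable_pt_lim f x l.
Proof.
  intros He Heq H eps Heps. destruct (H eps Heps) as [d Hd].
  assert (Hm : 0 < Rmin d e) by (apply Rmin_pos; [apply cond_pos|lra]).
  exists (mkposreal _ Hm). intros h Hh0 Hh. simpl in Hh.
  rewrite (Heq (x+h)), (Heq x).
  - apply Hd; auto. apply Rlt_le_trans with (1:=Hh); apply Rmin_l.
  - rewrite Rminus_diag, Rabs_R0; lra.
  - replace (x + h - x) with h by ring; apply Rlt_le_trans with (1:=Hh); apply Rmin_r.
Qed.

Lemma D_const a x : derivable_pt_lim (fun _ => a) x 0.
Proof. exact (derivable_pt_lim_const a x). Qed.
Lemma D_id x : derivable_pt_lim (fun t => t) x 1.
Proof. exact (derivable_pt_lim_id x). Qed.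
Lemma D_plus f g x lf lg : derivable_pt_lim f x lf -> derivable_pt_lim g x lg ->
  derivable_pt_lim (fun t => f t + g t) x (lf + lg).
Proof. intros; exact (derivable_pt_lim_plus f g x lf lg H H0). Qed.
Lemma D_minus f g x lf lg : derivable_pt_lim f x lf -> derivable_pt_lim g x lg ->
  derivable_pt_lim (fun t => f t - g t) x (lf - lg).
Proof. intros; exact (derivable_pt_lim_minus f g x lf lg H H0). Qed.
Lemma D_mult f g x lf lg : derivable_pt_lim f x lf -> derivable_pt_lim g x lg ->
  derivable_pt_lim (fun t => f t * g t) x (lf * g x + f x * lg).
Proof. intros; exact (derivable_pt_lim_mult f g x lf lg H H0). Qed.

Lemma D0_invsqrt f x : derivable_pt_lim f x 0 -> 0 < f x ->
  derivable_pt_lim (fun t => / sqrt (f t)) x 0.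
Proof.
  intros H Hp.
  assert (H1 : derivable_pt_lim (fun t => sqrt (f t)) x 0).
  { pose proof (derivable_pt_lim_comp f sqrt x 0 _ H (derivable_pt_lim_sqrt _ Hp)) as H0.
    rewrite Rmult_0_r in H0. exact H0. }
  pose proof (sqrt_lt_R0 _ Hp) as Hs.
  pose proof (derivable_pt_lim_div (fct_cte 1) (fun t => sqrt (f t)) x 0 0
     (derivable_pt_lim_const 1 x) H1 ltac:(lra)) as H2.
  apply (dpl_local _ (fun t => 1 / sqrt (f t)) _ _ 1 ltac:(lra)).
  - intros; unfold Rdiv; ring.
  - apply (dpl_eq _ _ _ _ H2). unfold Rsqr; field; lra.
Qed.

Lemma dpl_sum (F : R -> nat -> R) (d : nat -> R) x m :
  (forall k, (k <= m)%nat -> derivable_pt_lim (fun t => F t k) x (d k)) ->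
  derivable_pt_lim (fun t => sum_f_R0 (F t) m) x (sum_f_R0 d m).
Proof.
  induction m; intros H; simpl.
  - apply H; lia.
  - apply (D_plus (fun t => sum_f_R0 (F t) m) (fun t => F t (S m))).
    + apply IHm; intros; apply H; lia.
    + apply H; lia.
Qed.

Lemma D0_dot n P (g : R -> vec) x :
  (forall k, (k <= n)%nat -> derivable_pt_lim (fun t => g t k) x 0) ->
  derivable_pt_lim (fun t => dot n P (g t)) x 0.
Proof.
  intros H. unfold dot.
  apply dpl_eq with (l := sum_f_R0 (fun _ => 0) n); [|apply sum_zero].
  apply (dpl_sum (fun t k => P k * g t k) (fun _ => 0) x n).
  intros k Hk. apply dpl_eq with (1 := D_mult _ _ x _ _ (D_const (P k) x) (H k Hk)).
  ring.
Qed.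

Lemma sum_lin3 (f g h : nat -> R) (a b c : R) m :
  sum_f_R0 (fun k => a * f k + b * g k + c * h k) m
  = a * sum_f_R0 f m + b * sum_f_R0 g m + c * sum_f_R0 h m.
Proof. induction m; simpl; [ring| rewrite IHm; ring]. Qed.

Lemma a_lt1 n P v : dot n P P = 1 -> dot n v v = 1 -> ~ veq n P v -> ~ veq n P (vopp v) ->
  (dot n P v)^2 < 1.
Proof.
  intros HP Hv H1 H2. set (a := dot n P v).
  assert (E : sum_f_R0 (fun k => (P k - a * v k) * (P k - a * v k)) n = 1 - a^2).
  { transitivity (sum_f_R0 (fun k => 1 * (P k * P k) + (-2 * a) * (P k * v k)
                    + (a*a) * (v k * v k)) n).
    - apply sum_eq; intros; ring.
    - rewrite (sum_lin3 (fun k => P k * P k) (fun k => P k * v k) (fun k => v k * v k)).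
      unfold dot in HP, Hv, a. rewrite HP, Hv. fold a. ring. }
  pose proof (sum_sq_nonneg (fun k => P k - a * v k) n) as Hnn. cbv beta in Hnn.
  destruct (Rle_lt_or_eq_dec _ _ (Rle_trans _ _ _ Hnn (Req_le _ _ E))) as [Hlt|Heq].
  - lra.
  - exfalso. rewrite <- Heq in E.
    pose proof (sum_sq_zero (fun k => P k - a * v k) n E) as Hz. cbv beta in Hz.
    assert (Ha : (a - 1) * (a + 1) = 0) by nra.
    destruct (Rmult_integral _ _ Ha).
    + apply H1. intros k Hk. specialize (Hz k Hk). assert (a = 1) by lra. subst a. nra.
    + apply H2. intros k Hk. specialize (Hz k Hk). unfold vopp. assert (a = -1) by lra.
      rewrite H0 in Hz. lra.
Qed.

Lemma dot_P_ort n P (un : R -> vec) t : dot n P P = 1 ->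
  dot n P (ort n P un t) = 1 - 2 * (dot n P (un t))^2.
Proof.
  intros HP. unfold ort, vsub, vscale.
  set (a := dot n P (un t)).
  transitivity (dot n P P - 2 * a * a).
  - unfold dot at 1. unfold dot in a. fold a.
    transitivity (sum_f_R0 (fun k => 1 * (P k * P k) + (-2*a) * (P k * un t k)) n).
    + apply sum_eq; intros; ring.
    + rewrite sum_lin. unfold dot. fold a. ring.
  - rewrite HP; ring.
Qed.

Lemma dot_P_ped n P (un : R -> vec) t : dot n P P = 1 -> (dot n P (un t))^2 < 1 ->
  dot n P (ped n P un t) = sqrt (1 - (dot n P (un t))^2).
Proof.
  intros HP Ha. unfold ped, vsub, vscale.
  set (a := dot n P (un t)). set (r := sqrt (1 - a^2)).
  assert (Ha2 : a^2 < 1) by exact Ha. assert (Hr : 0 < r) by (apply sqrt_lt_R0; lra).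
  assert (Hrr : r * r = 1 - a^2) by (apply sqrt_sqrt; lra).
  transitivity (/ r * dot n P P + (- / r * a) * a).
  - unfold dot at 1. unfold dot in a. fold a.
    transitivity (sum_f_R0 (fun k => / r * (P k * P k) + (- / r * a) * (P k * un t k)) n).
    + apply sum_eq; intros; ring.
    + rewrite sum_lin. unfold dot. fold a. ring.
  - rewrite HP. transitivity ((1 - a^2) / r). field; lra. rewrite <- Hrr; field; lra.
Qed.

Theorem lemma9 (n : nat) (I : R -> Prop) (gamma : R -> vec)
    (u : nat -> R -> vec) (kappa : nat -> R -> R) (P : vec) :
  (2 <= n)%nat ->
  is_open_interval I ->
  vsmooth_on n I gamma ->
  (forall s, I s -> dot n (gamma s) (gamma s) = 1) ->
  (forall s, I s -> exists w, vderiv n gamma s w /\ vnorm n w = 1) ->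
  (forall s, I s -> veq n (u 0%nat s) (gamma s)) ->
  spherical_frame n I u kappa ->
  dot n P P = 1 ->
  (forall s, I s -> ~ veq n P (u n s) /\ ~ veq n P (vopp (u n s))) ->
  forall s, I s ->
    (vderiv n (ort n P (u n)) s vzero <->
     (vderiv n (ped n P (u n)) s vzero \/
      singular_point_Phi n P (ped n P (u n) s))).
Proof.
  intros Hn Hint Hsm Hg Hgw Hu0 Hfr HPP Hne s Hs.
  destruct Hfr as [_ [_ Hfr3]].
  destruct Hint as [_ [_ Hop]].
  assert (Ha : forall t, I t -> (dot n P (u n t))^2 < 1).
  { intros t Ht. destruct (Hne t Ht). apply a_lt1; auto. apply (Hfr3 t Ht). }
  assert (Hnsing : ~ singular_point_Phi n P (ped n P (u n) s)).
  { intros [J [HJ [c [[j0 [Hj0 Hc0]] Hsum]]]].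
    set (x := ped n P (u n) s).
    assert (Hpx : 0 < dot n P x).
    { unfold x; rewrite dot_P_ped; auto. apply sqrt_lt_R0. specialize (Ha s Hs); lra. }
    assert (HJv : forall i j, (i<=n)%nat -> (j<=n)%nat ->
       J i j = 2 * P j * x i + 2 * dot n P x * (if Nat.eqb i j then 1 else 0)).
    { intros i j Hi Hj. apply (uniqueness_limite _ 0 _ _ (HJ i j Hi Hj)).
      apply (dpl_local _ (fun t => 2 * (dot n P x + t * P j) *
               (x i + t * (if Nat.eqb i j then 1 else 0)) - P i) _ _ 1 ltac:(lra)).
      - intros y _. unfold Phi, vsub, vscale, vadd.
        assert (Hd : dot n P (fun k => x k + y * basis j k) = dot n P x + y * P j).
        { unfold dot. transitivity (sum_f_R0 (fun k => 1 * (P k * x k) +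
             y * ((if Nat.eqb k j then 1 else 0) * P k)) n).
          - apply sum_eq; intros; unfold basis; ring.
          - rewrite sum_lin, sum_delta by auto. ring. }
        fold x. rewrite Hd. unfold basis. ring.
      - eapply dpl_eq.
        + apply D_minus. apply D_mult. apply D_mult. apply D_const. apply D_plus. apply D_const.
          apply D_mult. apply D_id. apply D_const. apply D_plus. apply D_const.
          apply D_mult. apply D_id. apply D_const. apply D_const.
        + cbv beta. ring. }
    assert (Hrow : forall i, (i<=n)%nat -> 2 * x i * dot n P c + 2 * dot n P x * c i = 0).
    { intros i Hi. rewrite <- (Hsum i Hi). symmetry.
      transitivity (sum_f_R0 (fun j => (2 * x i) * (P j * c j) +
           (2 * dot n P x) * ((if Nat.eqb j i then 1 else 0) * c j)) n).
      - apply sum_eq; intros j Hj. rewrite HJv by auto. rewrite (Nat.eqb_sym i j). ring.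
      - rewrite sum_lin, sum_delta by auto.
        change (sum_f_R0 (fun j => P j * c j) n) with (dot n P c). ring. }
    assert (Hs2 : 2 * dot n P c * dot n P x + 2 * dot n P x * dot n P c = 0).
    { transitivity (sum_f_R0 (fun i => (2 * dot n P c) * (P i * x i) +
          (2 * dot n P x) * (P i * c i)) n).
      - rewrite sum_lin. reflexivity.
      - transitivity (sum_f_R0 (fun _ => 0) n); [|apply sum_zero].
        apply sum_eq; intros i Hi.
        transitivity (P i * (2 * x i * dot n P c + 2 * dot n P x * c i)); [ring|].
        rewrite Hrow by auto. ring. }
    assert (Hc : dot n P c = 0) by nra.
    specialize (Hrow j0 Hj0). rewrite Hc in Hrow. apply Hc0. nra. }
  unfold vderiv, vzero.
  split.
  - intros Hort. left. intros k Hk.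
    apply (dpl_local _ (fun t => (P k + ort n P (u n) t k) * / 2 *
        / sqrt ((1 + dot n P (ort n P (u n) t)) * / 2)) _ _ 1 ltac:(lra)).
    + intros y _. rewrite dot_P_ort by exact HPP.
      replace ((1 + (1 - 2 * dot n P (u n y) ^ 2)) * / 2) with (1 - dot n P (u n y) ^2) by field.
      unfold ped, ort, vscale, vsub. generalize (/ sqrt (1 - dot n P (u n y) ^ 2)); intro w; field.
    + assert (Hpos : 0 < (1 + dot n P (ort n P (u n) s)) * / 2).
      { rewrite dot_P_ort by exact HPP. specialize (Ha s Hs). lra. }
      assert (H1 : derivable_pt_lim (fun t => (1 + dot n P (ort n P (u n) t)) * / 2) s 0).
      { eapply dpl_eq. apply D_mult. apply D_plus. apply D_const. apply D0_dot. exact Hort.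
        apply D_const. ring. }
      eapply dpl_eq.
      * apply D_mult. apply D_mult. apply D_plus. apply D_const. apply (Hort k Hk).
        apply D_const. apply (D0_invsqrt _ s H1 Hpos).
      * ring.
  - intros [Hped | Hsing]; [| contradiction].
    intros k Hk. destruct (Hop s Hs) as [e [He Hie]].
    apply (dpl_local _ (fun t => 2 * dot n P (ped n P (u n) t) * ped n P (u n) t k - P k) _ _ e He).
    + intros y Hy. pose proof (Hie y Hy) as Iy. rewrite dot_P_ped by auto.
      pose proof (Ha y Iy) as Hay.
      unfold ped, ort, vscale, vsub.
      set (a := dot n P (u n y)) in *. set (r := sqrt (1 - a^2)).
      assert (Hr : 0 < r) by (apply sqrt_lt_R0; lra).
      field. lra.
    + eapply dpl_eq.
      * apply D_minus. apply D_mult. apply D_mult. apply D_const. apply D0_dot. exact Hped.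
        apply (Hped k Hk). apply D_const.
      * ring.
Qed.
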